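(* Let $G$ be a $(P_2\cup P_4)$-free graph. Then $\chi(G)\le\frac{\omega(G)^3-\omega(G)^2+2\omega(G)}{2}$.
   Context: All graphs are finite, simple and undirected. $P_n$ is the path on $n$ vertices and $P_2\cup P_4$ is the disjoint union of $P_2$ and $P_4$. $G$ is $(P_2\cup P_4)$-free if it has no induced subgraph isomorphic to $P_2\cup P_4$. $\chi$ is the chromatic number and $\omega$ the clique number. *)

(* Defs.v *)
From mathcomp Require Import all_boot.
Set Implicit Arguments. Unset Strict Implicit. Unset Printing Implicit Defensive.

Definition simple_graph (T : finType) (e : rel T) : Prop :=
  symmetric e /\ irreflexive e.

Definition is_clique (T : finType) (e : rel T) (A : {set T}) : bool :=
  [forall x in A, forall y in A, (x != y) ==> e x y].

Definition clique_number (T : finType) (e : rel T) : nat :=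
  \max_(A : {set T} | is_clique e A) #|A|.

Definition proper_coloring (T : finType) (e : rel T) (k : nat) (c : T -> 'I_k) : Prop :=
  forall x y, e x y -> c x != c y.

Definition colorable (T : finType) (e : rel T) (k : nat) : Prop :=
  exists c : T -> 'I_k, proper_coloring e c.

Lemma colorable_card (T : finType) (e : rel T) :
  irreflexive e -> exists k, colorable e k.
Proof.
move=> irr; exists #|T|; exists (@enum_rank T) => x y exy.
apply/negP => /eqP /enum_rank_inj Exy; subst y; by rewrite irr in exy.
Qed.

(* chromatic number chi(G): least k with a proper k-colouring
   (for a non-irreflexive relation it is defaulted to 0; only used on simple graphs) *)
Definition chromatic_number (T : finType) (e : rel T) : nat :=
  match boolP [forall x, ~~ e x x] with
  | AltTrue h =>
      ex_minn (P := fun k => [exists c : {ffun T -> 'I_k},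
                               [forall x, forall y, e x y ==> (c x != c y)]])
        (let: ex_intro k (ex_intro c hc) :=
             colorable_card (fun x => negbTE (forallP h x)) in
         ex_intro _ k (introT existsP (ex_intro _ (finfun c)
            (introT forallP (fun x => introT forallP (fun y =>
               introT implyP (fun exy => eq_ind_r (fun a => a != _ )
                 (eq_ind_r (fun b => c x != b) (hc x y exy) (ffunE c y))
                 (ffunE c x))))))))
  | AltFalse _ => 0
  end.

(* the graph P2 ∪ P4 on vertex set 'I_6: edges 0-1 and the path 2-3-4-5 *)
Definition P2uP4_edge (i j : 'I_6) : bool :=
  let a := minn i j in let b := maxn i j in
  [|| (a == 0) && (b == 1), (a == 2) && (b == 3),
      (a == 3) && (b == 4) | (a == 4) && (b == 5)].

Definition induces (T : finType) (e : rel T) (n : nat) (h : rel 'I_n) : Prop :=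
  exists f : 'I_n -> T, injective f /\ forall i j, e (f i) (f j) = h i j.

Definition P2uP4_free (T : finType) (e : rel T) : Prop :=
  ~ induces e P2uP4_edge.

(* Main.v *)
Require Import Defs.
From mathcomp Require Import all_boot.
From mathcomp Require Import zify.
Set Implicit Arguments. Unset Strict Implicit. Unset Printing Implicit Defensive.


Lemma ex_max (I : finType) (P : pred I) (F : I -> nat) i0 : P i0 ->
  exists2 i, P i & forall j, P j -> F j <= F i.
Proof. by move=> Pi0; case: (arg_maxnP F Pi0) => i Pi H; exists i. Qed.

Lemma ex_min (I : finType) (P : pred I) (F : I -> nat) i0 : P i0 ->
  exists2 i, P i & forall j, P j -> F i <= F j.
Proof. by move=> Pi0; case: (arg_minnP F Pi0) => i Pi H; exists i. Qed.

Section Cograph.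
Variables (T : finType) (e : rel T).
Hypotheses (esym : symmetric e) (eirr : irreflexive e).

Definition col (U : {set T}) (k : nat) :=
  exists c : T -> nat, (forall x, x \in U -> c x < k) /\
    (forall x y, x \in U -> y \in U -> e x y -> c x != c y).

Lemma col_union (A B U : {set T}) k1 k2 : col A k1 -> col B k2 ->
  {subset U <= A :|: B} -> col U (k1 + k2).
Proof.
move=> [c1 [b1 p1]] [c2 [b2 p2]] sub.
exists (fun x => if x \in A then c1 x else k1 + c2 x); split.
  move=> x /sub; rewrite inE; case: ifP => xA /=.
    by move=> _; have := b1 _ xA; lia.
  by move=> xB; have := b2 _ xB; lia.
move=> x y /sub xU /sub yU exy; rewrite !inE in xU yU.
case: ifP => xA; case: ifP => yA.
- exact: p1.
- by have := b1 _ xA; lia.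
- by have := b1 _ yA; lia.
- rewrite xA /= in xU; rewrite yA /= in yU.
  have := p2 _ _ xU yU exy; lia.
Qed.

Lemma col_sub (U V : {set T}) k k' : col V k -> {subset U <= V} -> k <= k' -> col U k'.
Proof.
move=> [c [b p]] sub kk; exists c; split.
  by move=> x /sub /b; lia.
by move=> x y /sub xV /sub yV; apply: p.
Qed.

Lemma col_seq (I : eqType) (F : I -> {set T}) k (s : seq I) :
  (forall P, P \in s -> col (F P) k) ->
  col [set x | has (fun P => x \in F P) s] (size s * k).
Proof.
elim: s => [|P s IH] H.
  by exists (fun _ => 0); split => x; rewrite inE.
rewrite /= mulSn.
apply: (col_union (A := F P) (B := [set x | has (fun P => x \in F P) s])).
- apply: H; exact: mem_head.
- apply: IH => Q Qs; apply: H; by rewrite in_cons Qs orbT.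
- by move=> x; rewrite !inE.
Qed.

Definition p4free (U : {set T}) := forall a b c d, a \in U -> b \in U -> c \in U -> d \in U ->
  e a b -> e b c -> e c d -> ~~ e a c -> ~~ e b d -> ~~ e a d -> False.

Definition indep (A : {set T}) := [forall x in A, forall y in A, ~~ e x y].

Lemma cliqueP (A : {set T}) : reflect (forall x y, x \in A -> y \in A -> x != y -> e x y) (is_clique e A).
Proof.
apply: (iffP forallP) => [H x y xA yA xy | H x].
  by move: (H x); rewrite xA /= => /forallP/(_ y); rewrite yA xy.
apply/implyP => xA; apply/forallP => y; apply/implyP => yA; apply/implyP; exact: H.
Qed.

Lemma indepP (A : {set T}) : reflect (forall x y, x \in A -> y \in A -> ~~ e x y) (indep A).
Proof.
apply: (iffP forallP) => [H x y xA yA | H x].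
  by move: (H x); rewrite xA /= => /forallP/(_ y); rewrite yA.
apply/implyP => xA; apply/forallP => y; apply/implyP => yA; exact: H.
Qed.

Lemma clique_sub (A B : {set T}) : A \subset B -> is_clique e B -> is_clique e A.
Proof. by move=> /subsetP sAB /cliqueP H; apply/cliqueP => x y /sAB xB /sAB yB; apply: H. Qed.

Lemma clique_add x (A : {set T}) : is_clique e A -> (forall y, y \in A -> e x y) ->
  is_clique e (x |: A).
Proof.
move=> /cliqueP H Hx; apply/cliqueP => a b; rewrite !inE.
case/orP => [/eqP->|aA]; case/orP => [/eqP->|bA].
- by rewrite eqxx.
- by move=> _; apply: Hx.
- by move=> _; rewrite esym; apply: Hx.
- exact: H.
Qed.

Lemma indep_add x (A : {set T}) : indep A -> (forall y, y \in A -> ~~ e x y) ->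
  indep (x |: A).
Proof.
move=> /indepP H Hx; apply/indepP => a b; rewrite !inE.
case/orP => [/eqP->|aA]; case/orP => [/eqP->|bA].
- by rewrite eirr.
- by apply: Hx.
- by rewrite esym; apply: Hx.
- exact: H.
Qed.

Lemma p4free_sub (U V : {set T}) : p4free V -> U \subset V -> p4free U.
Proof. by move=> H /subsetP s a b c d /s ? /s ? /s ? /s ?; apply: H. Qed.


Lemma meet (U K S : {set T}) : p4free U -> K \subset U -> is_clique e K -> K != set0 ->
  (forall x, x \in U -> x \notin K -> exists2 y, y \in K & ~~ e x y) ->
  S \subset U -> indep S ->
  (forall x, x \in U -> x \notin S -> exists2 y, y \in S & e x y) ->
  exists2 s, s \in K & s \in S.
Proof.
move=> p4 /subsetP KU /cliqueP Kc /set0Pn [k1 k1K] Kmax /subsetP SU /indepP Si Smax.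
case: (boolP [exists x in K, x \in S]) => [/existsP [s /andP [sK sS]] | H].
  by exists s.
have dis : forall x, x \in K -> x \notin S.
  by move=> x xK; apply/negP => xS; case/negP: H; apply/existsP; exists x; rewrite xK.
pose N k := [set s in S | e k s].
have [k0 k0K k0min] := ex_min (fun k => #|N k|) k1K.
have [s sS ek0s] := Smax k0 (KU _ k0K) (dis _ k0K).
have sK : s \notin K by apply/negP => sK; case/negP: (dis _ sK).
have [k' k'K nesk'] := Kmax s (SU _ sS) sK.
have lek := k0min _ k'K.
have : ~~ (N k' \subset N k0).
  apply/negP => sub.
  have : N k' \proper N k0.
    apply/properP; split => //; exists s; rewrite !inE ?sS ?ek0s //.
    by rewrite esym.
  by move/proper_card; rewrite ltnNge lek.
case/subsetPn => s'; rewrite !inE => /andP [s'S ek's'].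
rewrite s'S /= => nek0s'.
have k'k0 : k' != k0.
  by apply/eqP => E; move: nesk'; rewrite E esym ek0s.
exfalso; apply: (p4 s' k' k0 s (SU _ s'S) (KU _ k'K) (KU _ k0K) (SU _ sS)).
- by rewrite esym.
- exact: Kc.
- exact: ek0s.
- by rewrite esym.
- by rewrite esym.
- exact: Si.
Qed.

Lemma cograph_col k (U : {set T}) : p4free U ->
  (forall C : {set T}, C \subset U -> is_clique e C -> #|C| <= k) -> col U k.
Proof.
elim: k U => [|k IH] U p4 Hc.
  have Ux : forall x, x \in U -> False.
    move=> x xU.
    have Cx : is_clique e [set x].
      by apply/cliqueP => a b; rewrite !inE => /eqP-> /eqP->; rewrite eqxx.
    by have := Hc [set x]; rewrite sub1set xU cards1 Cx => /(_ isT isT).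
  exists (fun _ => 0); split => [x /Ux|x y /Ux] //.
have P0 : (set0 \subset U) && indep set0.
  by rewrite sub0set; apply/indepP => x y; rewrite inE.
have [S /andP [SU Si] Smax] := @ex_max _ (fun S : {set T} => (S \subset U) && indep S)
   (fun S => #|S|) set0 P0.
have Smax' : forall x, x \in U -> x \notin S -> exists2 y, y \in S & e x y.
  move=> x xU xS; case: (boolP [exists y in S, e x y]) => [/existsP [y /andP [yS exy]]|H].
    by exists y.
  have H' : (x |: S \subset U) && indep (x |: S).
    rewrite subUset sub1set xU SU /=; apply: indep_add => // y yS.
    by apply/negP => exy; case/negP: H; apply/existsP; exists y; rewrite yS exy.
  by have := Smax _ H'; rewrite cardsU1 xS add1n ltnn.
rewrite -add1n; apply: (col_union (A := S) (B := U :\: S)).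
- exists (fun _ => 0); split => // x y xS yS exy.
  by move/indepP: Si => /(_ x y xS yS); rewrite exy.
- apply: IH; first by apply: p4free_sub p4 _; apply: subsetDl.
  move=> C CUS Cc.
  have CU : C \subset U by apply: subset_trans CUS (subsetDl _ _).
  have [C0|/set0Pn [c cC]] := eqVneq C set0; first by rewrite C0 cards0.
  have [K /and3P [CK KU Kc] Kmax] := @ex_max _
     (fun K : {set T} => [&& C \subset K, K \subset U & is_clique e K])
     (fun S => #|S|) C ltac:(by rewrite /= subxx CU Cc).
  have Kmax' : forall x, x \in U -> x \notin K -> exists2 y, y \in K & ~~ e x y.
    move=> x xU xK; case: (boolP [exists y in K, ~~ e x y]) => [/existsP [y /andP [yK exy]]|H].
      by exists y.
    have H' : [&& C \subset x |: K, x |: K \subset U & is_clique e (x |: K)].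
      rewrite subUset sub1set xU KU (subset_trans CK (subsetUr _ _)) /=.
      apply: clique_add => // y yK.
      by apply/negPn/negP => exy; case/negP: H; apply/existsP; exists y; rewrite yK.
    by have := Kmax _ H'; rewrite cardsU1 xK add1n ltnn.
  have KS : K != set0 by apply/set0Pn; exists c; apply: (subsetP CK).
  have [s sK sS] := meet p4 KU Kc KS Kmax' SU Si Smax'.
  have : C \proper K.
    apply/properP; split => //; exists s => //.
    by apply/negP => /(subsetP CUS); rewrite inE sS.
  move/proper_card => lt; have := Hc K KU Kc; lia.
- by move=> x xU; rewrite !inE xU andbT orbN.
Qed.

End Cograph.



Lemma chi_le (T : finType) (e : rel T) m : col e setT m -> chromatic_number e <= m.
Proof.
move=> [c [b p]].
rewrite /chromatic_number; destruct (boolP [forall x, ~~ e x x]) as [h|h]; last by [].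
case: ex_minnP => k _ Hmin; apply: Hmin.
apply/existsP; exists [ffun x => Ordinal (b x (in_setT x))].
apply/forallP => x; apply/forallP => y; apply/implyP => exy.
by rewrite !ffunE; apply: p; rewrite ?in_setT.
Qed.

Lemma bin2_2 n : 2 * 'C(n, 2) = n * n.-1.
Proof.
elim: n => [|n IH] //.
rewrite binS bin1 mulnDr IH /=; case: n {IH} => [|n] //=; lia.
Qed.

Lemma mk_induce (T : finType) (e : rel T) : symmetric e -> irreflexive e ->
  forall u v a b c d, e u v -> ~~ e a u -> ~~ e a v -> ~~ e b u -> ~~ e b v ->
  ~~ e c u -> ~~ e c v -> ~~ e d u -> ~~ e d v ->
  e a b -> e b c -> e c d -> ~~ e a c -> ~~ e b d -> ~~ e a d -> induces e P2uP4_edge.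
Proof.
move=> es ei u v a b c d h1 h2 h3 h4 h5 h6 h7 h8 h9 h10 h11 h12 h13 h14 h15.
have p1 : e u v = true by done. have q1 : e v u = true by rewrite es.
have p2 : e a b = true by done. have q2 : e b a = true by rewrite es.
have p3 : e b c = true by done. have q3 : e c b = true by rewrite es.
have p4 : e c d = true by done. have q4 : e d c = true by rewrite es.
have p5 : e a u = false by apply/negbTE. have q5 : e u a = false by rewrite es; apply/negbTE.
have p6 : e a v = false by apply/negbTE. have q6 : e v a = false by rewrite es; apply/negbTE.
have p7 : e b u = false by apply/negbTE. have q7 : e u b = false by rewrite es; apply/negbTE.
have p8 : e b v = false by apply/negbTE. have q8 : e v b = false by rewrite es; apply/negbTE.
have p9 : e c u = false by apply/negbTE. have q9 : e u c = false by rewrite es; apply/negbTE.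
have p10 : e c v = false by apply/negbTE. have q10 : e v c = false by rewrite es; apply/negbTE.
have p11 : e d u = false by apply/negbTE. have q11 : e u d = false by rewrite es; apply/negbTE.
have p12 : e d v = false by apply/negbTE. have q12 : e v d = false by rewrite es; apply/negbTE.
have p13 : e a c = false by apply/negbTE. have q13 : e c a = false by rewrite es; apply/negbTE.
have p14 : e b d = false by apply/negbTE. have q14 : e d b = false by rewrite es; apply/negbTE.
have p15 : e a d = false by apply/negbTE. have q15 : e d a = false by rewrite es; apply/negbTE.
have r1 := ei u. have r2 := ei v. have r3 := ei a. have r4 := ei b. have r5 := ei c. have r6 := ei d.
clear h1 h2 h3 h4 h5 h6 h7 h8 h9 h10 h11 h12 h13 h14 h15.
pose f := fun i : 'I_6 => nth u [:: u; v; a; b; c; d] i.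
have H : forall i j, e (f i) (f j) = P2uP4_edge i j.
  by case=> [[|[|[|[|[|[|i]]]]]] Hi] //; case=> [[|[|[|[|[|[|j]]]]]] Hj] //=.
exists f; split => //.
case=> [[|[|[|[|[|[|i]]]]]] Hi] //; case=> [[|[|[|[|[|[|j]]]]]] Hj] //; rewrite /f /= => fij;
  first [by apply/val_inj | subst; match goal with H1 : ?t = true, H2 : ?t = false |- _ => by rewrite H1 in H2 end].
Qed.



Theorem corollary4p3 (T : finType) (e : rel T) :
  simple_graph e -> P2uP4_free e ->
  2 * chromatic_number e <=
    clique_number e ^ 3 - clique_number e ^ 2 + 2 * clique_number e.
Proof.
move=> [es ei] free.
have P0 : is_clique e set0 by apply/cliqueP => x y; rewrite inE.
have [K Kc Kmax] := @ex_max _ (fun A : {set T} => is_clique e A) (fun A => #|A|) set0 P0.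
have om : clique_number e = #|K|.
  apply/eqP; rewrite eqn_leq; apply/andP; split.
    by apply/bigmax_leqP => A; apply: Kmax.
  exact: (leq_bigmax_cond K Kc).
rewrite om.
have Kcl := elimT (cliqueP _ _) Kc.
pose M x := [set v in K | ~~ e x v].
have MK : forall x, x \in K -> M x = [set x].
  move=> x xK; apply/setP => y; rewrite !inE; apply/andP/eqP => [[yK nxy]|->].
    case: (eqVneq y x) => // yx; move: nxy.
    by rewrite es (Kcl y x yK xK yx).
  by rewrite xK ei.
have Mout : forall x y, y \in K -> y \notin M x -> e x y.
  by move=> x y yK; rewrite inE yK /= negbK.
have Mne : forall x, M x != set0.
  move=> x; case: (boolP (x \in K)) => xK; first by rewrite MK // -cards_eq0 cards1.
  apply/negP => /eqP M0.
  have : is_clique e (x |: K).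
    apply: clique_add => // y yK; apply: Mout => //; by rewrite M0 inE.
  by move/Kmax; rewrite cardsU1 xK add1n ltnn.
have MsubK : forall x, M x \subset K by move=> x; apply/subsetP => y; rewrite inE => /andP [].
pose wv x := odflt x [pick v in M x].
have Mw : forall x, #|M x| == 1 -> M x = [set wv x].
  move=> x /cards1P [v0 E]; rewrite /wv E; case: pickP => [v|]; first by rewrite inE => /eqP->.
  by move/(_ v0); rewrite inE eqxx.
pose Part1 := [set x | #|M x| == 1].
have col1 : col e Part1 #|K|.
  exists (fun x => index (wv x) (enum K)); split.
    move=> x; rewrite inE => /Mw Mx.
    have : wv x \in K by apply: (subsetP (MsubK x)); rewrite Mx inE.
    by rewrite cardE index_mem mem_enum.
  move=> x y; rewrite !inE => /Mw Mx /Mw My exy; apply/negP => /eqP Eidx.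
  have wxK : wv x \in K by apply: (subsetP (MsubK x)); rewrite Mx inE.
  have wyK : wv y \in K by apply: (subsetP (MsubK y)); rewrite My inE.
  have Ew : wv x = wv y.
    by have := congr1 (nth x (enum K)) Eidx; rewrite !nth_index ?mem_enum.
  set v := wv x in Mx Ew wxK.
  have vMx : v \in M x by rewrite Mx inE.
  have vMy : v \in M y by rewrite My inE Ew.
  have nxv : ~~ e x v by move: vMx; rewrite inE => /andP [].
  have nyv : ~~ e y v by move: vMy; rewrite inE => /andP [].
  case: (boolP (x \in K)) => xK.
    have : v \in M x by [].
    rewrite MK // inE => /eqP vx; by move: nyv; rewrite vx es exy.
  case: (boolP (y \in K)) => yK.
    have : v \in M y by [].
    rewrite MK // inE => /eqP vy; by move: nxv; rewrite vy exy.
  have xy : x != y by apply/eqP => E; move: exy; rewrite E ei.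
  have C1 : is_clique e (y |: (K :\ v)).
    apply: clique_add => //; first by apply: clique_sub Kc; apply: subsetDl.
    move=> u; rewrite !inE => /andP [uv uK]; apply: Mout => //.
    by rewrite My inE -Ew.
  have C2 : is_clique e (x |: (y |: (K :\ v))).
    apply: clique_add => // u; rewrite !inE => /orP [/eqP->|/andP [uv uK]] //.
    by apply: Mout => //; rewrite Mx inE.
  have := Kmax _ C2; rewrite !cardsU1 !inE negb_or xy /= (negbTE xK) (negbTE yK) !andbF /=.
  by rewrite [X in _ <= X](cardsD1 v K) wxK /= leq_add2l add1n ltnn.
pose Ps := [set P : {set T} | P \subset K & #|P| == 2].
pose F (P : {set T}) := [set x | (x \notin K) && (P \subset M x)].
have colF : forall P, P \in enum Ps -> col e (F P) #|K|.
  move=> P; rewrite mem_enum inE => /andP [PK /cards2P [u [v [uv EP]]]].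
  have uK : u \in K by apply: (subsetP PK); rewrite EP !inE eqxx.
  have vK : v \in K by apply: (subsetP PK); rewrite EP !inE eqxx orbT.
  have nF : forall x, x \in F P -> ~~ e x u /\ ~~ e x v.
    move=> x; rewrite inE EP => /andP [_ /subsetP S].
    have := S u; rewrite !inE eqxx => /(_ isT) /andP [_ ->].
    by have := S v; rewrite !inE eqxx orbT => /(_ isT) /andP [_ ->].
  apply: (cograph_col es ei).
    move=> a b c d aF bF cF dF eab ebc ecd nac nbd nad.
    have [na1 na2] := nF a aF. have [nb1 nb2] := nF b bF.
    have [nc1 nc2] := nF c cF. have [nd1 nd2] := nF d dF.
    apply: free; apply: (mk_induce es ei (u := u) (v := v) (a := a) (b := b) (c := c) (d := d)) => //.
    exact: Kcl.
  by move=> C _ Cc; apply: Kmax.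
have colP := col_seq colF.
have colT : col e setT (#|K| + size (enum Ps) * #|K|).
  apply: (col_union col1 colP) => x _.
  rewrite !inE; case: (boolP (#|M x| == 1)) => //= M1.
  have xK : x \notin K by apply/negP => xK; move: M1; rewrite MK // cards1.
  have [a aM] := set0Pn _ (Mne x).
  have : 0 < #|M x :\ a|.
    have := Mne x; rewrite -cards_eq0 (cardsD1 a) aM; move: M1; rewrite (cardsD1 a) aM.
    by case: #|_|.
  rewrite card_gt0 => /set0Pn [b]; rewrite in_setD1 => /andP [ba bM].
  apply/hasP; exists [set a; b].
    have ab : a != b by rewrite eq_sym.
    rewrite mem_enum inE cards2 ab andbT.
    by apply/subsetP => y; rewrite !inE => /orP [] /eqP ->; apply: (subsetP (MsubK x)).
  by rewrite inE xK /= subUset !sub1set aM.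
have := chi_le colT.
rewrite -cardE cards_draws.
have := bin2_2 #|K|.
set w := #|K|; set C2 := 'C(w, 2); set ch := chromatic_number e.
move=> h1 h2.
clearbody ch C2 w.
have h3 : w * w <= w * w * w.
  case: (posnP w) => [->|wp] //; by rewrite leq_pmulr.
rewrite !expnS expn0 !muln1.
nia.
Qed.
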